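(* Let $\Sigma=(B,\sigma)$ be a signed graph whose underlying graph $B$ is a block that is neither a single edge nor a circle, and suppose $[e,C,+]$ is a positive battery. Then every bridge $D$ of $C$ is balanced (contains no negative circle).
   Context: A signed graph $\Sigma=(G,\sigma)$ is a finite graph $G$ with signature $\sigma:E(G)\to\{+,-\}$. A circle is a connected 2-regular subgraph; its sign is the product of its edge signs. A subgraph is balanced if all its circles are positive. A block is a maximal subgraph without a cutpoint. For a circle $C$, a chord is an edge not in $C$ joining two distinct vertices of $C$; a bridge of $C$ is either a chord or a connected component $D$ of $G\setminus V(C)$ together with all edges joining $D$ to $C$. $[e,C,+]$ means $C$ is a positive circle containing $e$ and is the only positive circle containing $e$. *)

(* Defs.v *)
From mathcomp Require Import all_boot.
Set Implicit Arguments. Unset Strict Implicit. Unset Printing Implicit Defensive.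

Section SignedGraph.
Variables (V E : finType).
Variable ends : E -> V * V.
(* sig f = true  means  the edge f is negative *)
Variable sig : E -> bool.

Definition incident (v : V) (f : E) : bool := ((ends f).1 == v) || ((ends f).2 == v).
Definition is_loop (f : E) : bool := (ends f).1 == (ends f).2.

Definition vset (C : {set E}) : {set V} := [set v | [exists f in C, incident v f]].

Definition deg (C : {set E}) (v : V) : nat :=
  \sum_(f in C) (((ends f).1 == v) + ((ends f).2 == v)).

Definition adjE (C : {set E}) : rel V :=
  fun u w => [exists f in C, (ends f == (u, w)) || (ends f == (w, u))].

Definition is_circle (C : {set E}) : Prop :=
  C != set0 /\
  (forall v, v \in vset C -> deg C v = 2) /\
  (forall u w, u \in vset C -> w \in vset C -> connect (adjE C) u w).

(* the sign of a circle is the product of its edge signs *)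
Definition positive (C : {set E}) : bool := ~~ odd #|[set f in C | sig f]|.

Definition balanced (D : {set E}) : Prop :=
  forall C' : {set E}, C' \subset D -> is_circle C' -> positive C'.

Definition adj_avoid (S : {set V}) : rel V :=
  fun u w => [&& u \notin S, w \notin S & adjE [set: E] u w].

Definition connected_avoid (S : {set V}) : Prop :=
  forall u w, u \notin S -> w \notin S -> connect (adj_avoid S) u w.

(* The whole graph is a block: connected, no cutpoint; a loop forms a block
   by itself (standard convention), so a block containing a loop is that loop. *)
Definition is_block : Prop :=
  connected_avoid set0 /\
  (forall v, connected_avoid [set v]) /\
  (forall f, is_loop f -> #|E| = 1).

Definition single_edge : Prop := #|E| = 1.
Definition graph_is_circle : Prop := is_circle [set: E] /\ forall v, v \in vset [set: E].

Definition battery_pos (e : E) (C : {set E}) : Prop :=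
  [/\ is_circle C, e \in C, positive C &
      forall C' : {set E}, is_circle C' -> e \in C' -> positive C' -> C' = C].

(* bridges of C, given by their edge sets:
   a chord (edge not in C joining two distinct vertices of C), or
   a component of G \ V(C) (represented by one of its vertices x) with all
   edges joining it to C, i.e. all edges having an endpoint in that component *)
Definition is_bridge (C : {set E}) (D : {set E}) : Prop :=
  (exists f, [/\ f \notin C, (ends f).1 \in vset C, (ends f).2 \in vset C,
               ~~ is_loop f & D = [set f]]) \/
  (exists x, x \notin vset C /\
     D = [set f | [exists u, incident u f && connect (adj_avoid (vset C)) x u]]).

End SignedGraph.

(* Main.v *)
Require Import Defs.
From mathcomp Require Import all_boot.
Set Implicit Arguments. Unset Strict Implicit. Unset Printing Implicit Defensive.

Lemma disjP (T : finType) (A B : {set T}) :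
  (forall x, x \in A -> x \notin B) -> [disjoint A & B].
Proof. move=> H; rewrite disjoints_subset; apply/subsetP => x /H; by rewrite inE. Qed.

Lemma disjE (T : finType) (A B : {set T}) x :
  [disjoint A & B] -> x \in A -> x \in B -> False.
Proof. by move=> /disjointFr H /H ->. Qed.

Lemma neq_sym (T : eqType) (x y : T) : x != y -> y != x.
Proof. by rewrite eq_sym. Qed.

Section Gr.
Variables (V E : finType) (ends : E -> V * V).
Hypothesis noloop : forall f, ~~ is_loop ends f.
Implicit Types (F A B P Q X Y W Z N : {set E}) (u v w a b c : V).

Local Notation deg := (deg ends).
Local Notation vset := (vset ends).
Local Notation adjE := (adjE ends).
Local Notation inc := (incident ends).

Definition ew (f : E) (v : V) : nat := ((ends f).1 == v) + ((ends f).2 == v).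

Lemma degE F v : deg F v = \sum_(f in F) ew f v.
Proof. by []. Qed.

Lemma ew_inc f v : (0 < ew f v) = inc v f.
Proof. by rewrite /ew /incident; case: eqP; case: eqP. Qed.

Lemma vsetP F v : (v \in vset F) = (0 < deg F v).
Proof.
rewrite inE lt0n degE sum_nat_eq0 negb_forall.
apply/existsP/existsP => [[f /andP[fF If]]|[f Hf]]; exists f.
  by rewrite fF /= -lt0n ew_inc.
by move: Hf; rewrite negb_imply -lt0n ew_inc.
Qed.

Lemma deg0 F v : (deg F v == 0) = (v \notin vset F).
Proof. by rewrite vsetP -eqn0Ngt. Qed.

Lemma deg_setU (A B : {set E}) v : [disjoint A & B] -> deg (A :|: B) v = deg A v + deg B v.
Proof.
move=> dAB; rewrite !degE -bigU //; apply: eq_bigl => f; by rewrite !inE.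
Qed.

Lemma deg_sub (A B : {set E}) v : A \subset B -> deg B v = deg A v + deg (B :\: A) v.
Proof.
move=> sAB; rewrite -deg_setU; last by apply/disjP => f fA; rewrite inE fA.
by rewrite setDE setUIr setUCr setIT (setUidPr sAB).
Qed.

Lemma deg_le (A B : {set E}) v : A \subset B -> deg A v <= deg B v.
Proof. by move=> /deg_sub ->; apply: leq_addr. Qed.

Lemma deg1 f v : deg [set f] v = ew f v.
Proof. by rewrite degE big_set1. Qed.

Lemma deg_set0 v : deg set0 v = 0.
Proof. by rewrite degE big_set0. Qed.

Lemma ew_le2 f v : ew f v <= 2.
Proof. by rewrite /ew; case: eqP; case: eqP. Qed.

Lemma vsetU (A B : {set E}) : vset (A :|: B) = vset A :|: vset B.
Proof.
apply/setP => v; rewrite !inE; apply/existsP/orP.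
  by move=> [f /andP[]]; rewrite inE => /orP[] fA If; [left|right]; apply/existsP; exists f; rewrite fA.
by move=> [] /existsP[f /andP[fA If]]; exists f; rewrite inE fA ?orbT.
Qed.

Lemma vset_sub (A B : {set E}) : A \subset B -> vset A \subset vset B.
Proof.
move=> sAB; apply/subsetP => v; rewrite !inE => /existsP[f /andP[fA If]].
by apply/existsP; exists f; rewrite (subsetP sAB).
Qed.

Lemma vset1 f : vset [set f] = [set (ends f).1; (ends f).2].
Proof.
apply/setP => v; rewrite vsetP deg1 ew_inc !inE /incident.
by rewrite ![v == _]eq_sym.
Qed.

Lemma vset0 : vset set0 = set0.
Proof. by apply/setP => v; rewrite vsetP deg_set0 inE. Qed.

Lemma ends_vset F f : f \in F -> ((ends f).1 \in vset F) && ((ends f).2 \in vset F).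
Proof.
move=> fF; apply/andP; split; rewrite inE; apply/existsP; exists f;
  by rewrite fF /incident eqxx ?orbT.
Qed.

Lemma inc_vset F f v : f \in F -> inc v f -> v \in vset F.
Proof. by move=> fF If; rewrite inE; apply/existsP; exists f; rewrite fF. Qed.

Lemma vset_eq0 F : (vset F == set0) = (F == set0).
Proof.
apply/eqP/eqP => [H|->]; last exact: vset0.
apply/setP => f; rewrite inE; apply/negP => fF.
by move: (ends_vset fF); rewrite H inE.
Qed.

Lemma adjE_sym F : symmetric (adjE F).
Proof.
move=> u w; apply/existsP/existsP => [[f /andP[fF H]]|[f /andP[fF H]]]; exists f;
  by rewrite fF orbC.
Qed.

Lemma connect_symE F : connect_sym (adjE F).
Proof. exact/sym_connect_sym/adjE_sym. Qed.

Lemma adjE_mono (A B : {set E}) : A \subset B -> forall u w, adjE A u w -> adjE B u w.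
Proof.
move=> sAB u w /existsP[f /andP[fA H]]; apply/existsP; exists f.
by rewrite (subsetP sAB).
Qed.

Lemma connect_mono (A B : {set E}) u w : A \subset B -> connect (adjE A) u w -> connect (adjE B) u w.
Proof.
move=> sAB; apply: connect_sub => x y /(adjE_mono sAB); exact: connect1.
Qed.

Lemma adjE_edge F u w : adjE F u w ->
  exists2 f, f \in F & (ends f = (u, w)) \/ (ends f = (w, u)).
Proof.
move=> /existsP[f /andP[fF /orP[]/eqP H]]; exists f => //; by [left|right].
Qed.

Lemma edge_adjE F f : f \in F -> adjE F (ends f).1 (ends f).2.
Proof. move=> fF; apply/existsP; exists f; by rewrite fF -surjective_pairing eqxx. Qed.

Lemma adjE_vset F u w : adjE F u w -> (u \in vset F) && (w \in vset F).
Proof.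
move=> /adjE_edge[f fF [] He]; move: (ends_vset fF); rewrite He //= andbC //.
Qed.

Lemma connect_vset F u w : connect (adjE F) u w -> u \in vset F -> w \in vset F.
Proof.
move=> /connectP[s]; elim: s u => [|x s IH] u /= ; first by move=> _ ->.
by move=> /andP[/adjE_vset/andP[_ Hx] Hp] Hl _; apply: (IH x).
Qed.


Lemma connect_start F u w : connect (adjE F) u w -> u != w -> u \in vset F.
Proof.
move=> /connectP[[|x s] /=]; first by move=> _ ->; rewrite eqxx.
by move=> /andP[/adjE_vset/andP[]].
Qed.

Lemma connect_closed (r : rel V) (S : pred V) x y :
  (forall u w, S u -> r u w -> S w) -> S x -> connect r x y -> S y.
Proof.
move=> H Sx /connectP[s]; elim: s x Sx => [|z s IH] x Sx /=; first by move=> _ ->.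
move=> /andP[rxz pz] ly; apply: (IH z) => //; exact: H rxz.
Qed.

Definition conn F := forall u w, u \in vset F -> w \in vset F -> connect (adjE F) u w.

Definition pth P a b :=
  [/\ deg P a = (a != b), deg P b = (a != b),
      (forall v, v \in vset P -> v != a -> v != b -> deg P v = 2) &
      (forall v, v \in vset P -> connect (adjE P) a v)].

Lemma sum_eqV (S : {set V}) x : \sum_(y in S) (x == y) = (x \in S).
Proof.
case: (boolP (x \in S)) => H.
  rewrite (bigD1 x) //= eqxx big1 // => y /andP[_]; by rewrite eq_sym => /negbTE ->.
by rewrite big1 // => y yS; apply/eqP; rewrite eqb0; apply: contraNneq H => ->.
Qed.

Lemma sum_even (I : finType) (P : pred I) (G : I -> nat) :
  (forall i, P i -> ~~ odd (G i)) -> ~~ odd (\sum_(i | P i) G i).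
Proof.
move=> H; apply: (big_ind (fun n => ~~ odd n)) => //.
by move=> m n; rewrite oddD => /negbTE -> /negbTE ->.
Qed.

Lemma handshake F x :
  ~~ odd (\sum_(y in [set y | connect (adjE F) x y]) deg F y).
Proof.
set S := [set y | connect (adjE F) x y].
have -> : \sum_(y in S) deg F y =
          \sum_(f in F) (((ends f).1 \in S) + ((ends f).2 \in S)).
  rewrite (eq_bigr (fun y => \sum_(f in F) ew f y)) //.
  rewrite exchange_big /=; apply: eq_bigr => f _.
  by rewrite big_split /= !sum_eqV.
apply: sum_even => f fF.
have -> : ((ends f).2 \in S) = ((ends f).1 \in S).
  rewrite !inE; apply/idP/idP => H; apply: connect_trans H _; apply: connect1.
    by rewrite adjE_sym; apply: edge_adjE.
  exact: edge_adjE.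
by rewrite addnn odd_double.
Qed.

Lemma handshake_other F x : odd (deg F x) ->
  exists y, [/\ y != x, connect (adjE F) x y & odd (deg F y)].
Proof.
move=> ox.
case: (boolP [exists y, [&& y != x, connect (adjE F) x y & odd (deg F y)]]).
  by move=> /existsP[y /and3P[]]; exists y.
rewrite negb_exists => /forallP H; exfalso.
move: (handshake F x); rewrite (bigD1 x) ?inE ?connect0 //= oddD ox /=.
rewrite negbK; apply/negP; apply: sum_even => y; rewrite inE => /andP[cy yx].
by move: (H y); rewrite yx cy.
Qed.

Lemma comp_conn G' F a b : conn G' -> F \subset G' -> a \in vset G' ->
  deg F a <= 1 -> deg F b <= 1 ->
  (forall y, y \in vset F -> y != a -> y != b ->
      ~~ odd (deg F y) /\ (forall g, g \in G' -> inc y g -> g \in F)) ->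
  forall v, v \in vset F -> connect (adjE F) a v.
Proof.
move=> cG sFG aG da db Hy v vF.
have csym := connect_symE F.
case: (boolP (connect (adjE F) v a)) => Hva; first by rewrite csym.
exfalso.
case: (boolP (connect (adjE F) v b)) => Hvb.
  have bF : b \in vset F by apply: connect_vset Hvb vF.
  have db1 : deg F b = 1.
    by move: db bF; rewrite vsetP; case: (deg F b) => [|[]].
  have ob : odd (deg F b) by rewrite db1.
  have [y [yb cby oy]] := handshake_other ob.
  have yF : y \in vset F by apply: connect_vset cby bF.
  have ya : y != a.
    by apply: contraNneq Hva => <-; apply: connect_trans Hvb cby.
  by have [/negP] := Hy y yF ya yb.
have vG : v \in vset G' by apply: (subsetP (vset_sub sFG)).
have H := cG v a vG aG.
move/negP: (Hva) => Hva'; apply: Hva'.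
apply: (@connect_closed (adjE G') (fun y => connect (adjE F) v y) v a _ (connect0 _ _) H).
move=> u w cvu /adjE_edge[g gG Hg].
have uF : u \in vset F by apply: connect_vset cvu vF.
have ua : u != a by apply: contraNneq Hva => <-.
have ub : u != b by apply: contraNneq Hvb => <-.
have [_ Hg'] := Hy u uF ua ub.
have gF : g \in F.
  apply: Hg' => //; rewrite /incident; case: Hg => -> /=; by rewrite eqxx ?orbT.
apply: connect_trans cvu (connect1 _).
by apply/existsP; exists g; rewrite gF; case: Hg => ->; rewrite eqxx ?orbT.
Qed.

Lemma pth_trivial P a : pth P a a -> P = set0.
Proof.
move=> [da _ _ cP]; apply/eqP; rewrite -vset_eq0; apply/eqP/setP => v.
rewrite in_set0; apply/negbTE/negP => vP.
have aP : a \notin vset P by rewrite -deg0 da eqxx.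
case: (eqVneq a v) => [av|av]; first by move: aP; rewrite av vP.
by move: aP; rewrite (connect_start (cP v vP) av).
Qed.

Lemma pth0 a : pth set0 a a.
Proof.
by split; rewrite ?deg_set0 ?eqxx // => v; rewrite vset0 inE.
Qed.

Lemma pth_ends P a b : pth P a b -> a != b -> (a \in vset P) && (b \in vset P).
Proof. by move=> [da db _ _] ab; rewrite !vsetP da db ab. Qed.

Lemma pth_conn P a b : pth P a b -> conn P.
Proof.
move=> [_ _ _ cP] u w uP wP; apply: connect_trans (cP w wP).
by rewrite connect_symE; apply: cP.
Qed.

Lemma pth_rev P a b : pth P a b -> pth P b a.
Proof.
move=> pP; have cP := pth_conn pP; have [da db Hi _] := pP.
split; rewrite ?(eq_sym b a) //; first by move=> v vP vb va; apply: Hi.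
move=> v vP; case: (eqVneq a b) => [ab|ab].
  by subst b; move: vP; rewrite (pth_trivial pP) vset0 inE.
by apply: cP => //; have /andP[] := pth_ends pP ab.
Qed.

Lemma pth_edge f : pth [set f] (ends f).1 (ends f).2.
Proof.
have nl := noloop f; rewrite /is_loop in nl.
split; rewrite ?deg1 /ew ?eqxx ?(eq_sym (ends f).2) ?(negbTE nl) ?nl //.
  by move=> v; rewrite vset1 !inE => /orP[] /eqP -> ; rewrite eqxx.
move=> v; rewrite vset1 !inE => /orP[] /eqP ->; first exact: connect0.
by apply: connect1; apply: edge_adjE; rewrite inE.
Qed.

Lemma sub1P (T : finType) (A B : {set T}) x :
  A :&: B \subset [set x] -> forall z, z \in A -> z \in B -> z = x.
Proof. by move=> /subsetP H z zA zB; apply/set1P/H; rewrite inE zA zB. Qed.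

Lemma sub2P (T : finType) (A B : {set T}) x y :
  A :&: B \subset [set x; y] -> forall z, z \in A -> z \in B -> (z = x) \/ (z = y).
Proof.
move=> /subsetP H z zA zB; have : z \in A :&: B by rewrite inE zA zB.
by move=> /H; rewrite !inE => /orP[]/eqP; [left|right].
Qed.

Lemma disj_vset P Q b : vset P :&: vset Q \subset [set b] -> [disjoint P & Q].
Proof.
move=> H; apply: disjP => f fP; apply/negP => fQ.
have /andP[h1 h2] := ends_vset fP; have /andP[h3 h4] := ends_vset fQ.
have e1 := sub1P H h1 h3; have e2 := sub1P H h2 h4.
by move: (noloop f); rewrite /is_loop e1 e2 eqxx.
Qed.

Lemma pth_cat P Q a b c : pth P a b -> pth Q b c ->
  vset P :&: vset Q \subset [set b] -> pth (P :|: Q) a c.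
Proof.
move=> pP pQ H; have dPQ := disj_vset H; have Hv := sub1P H.
case: (eqVneq a b) => [ab|ab].
  by subst b; rewrite (pth_trivial pP) set0U.
case: (eqVneq b c) => [bc|bc].
  by subst c; rewrite (pth_trivial pQ) setU0.
have /andP[aP bP] := pth_ends pP ab; have /andP[bQ cQ] := pth_ends pQ bc.
have aQ : a \notin vset Q by apply/negP => aQ; move: ab; rewrite (Hv a) ?eqxx.
have cP : c \notin vset P by apply/negP => cP; move: bc; rewrite (Hv c) ?eqxx.
have ac : a != c by apply: contraNneq cP => <-.
have [daP dbP HiP cnP] := pP; have [dbQ dcQ HiQ cnQ] := pQ.
move: aQ cP; rewrite -!deg0 => /eqP aQ /eqP cP.
split; rewrite ?deg_setU // ?ac ?daP ?aQ ?cP ?dcQ ?bc ?ab //.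
  move=> v; rewrite vsetU inE deg_setU // => vPQ va vc.
  case: (eqVneq v b) => [->|vb]; first by rewrite dbP dbQ ab bc.
  case/orP: vPQ => vX.
    have vQ : v \notin vset Q by apply/negP => vQ; move: vb; rewrite (Hv v) ?eqxx.
    by move: vQ; rewrite -deg0 => /eqP ->; rewrite HiP.
  have vP : v \notin vset P by apply/negP => vP; move: vb; rewrite (Hv v) ?eqxx.
  by move: vP; rewrite -deg0 => /eqP ->; rewrite HiQ.
move=> v; rewrite vsetU inE => /orP[] vX.
  by apply: connect_mono (subsetUl _ _) (cnP v vX).
apply: connect_trans (connect_mono (subsetUl _ _) (cnP b bP)) _.
by apply: connect_mono (subsetUr _ _) (cnQ v vX).
Qed.

Lemma circ_union P Q a b : pth P a b -> pth Q a b -> a != b ->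
  [disjoint P & Q] -> vset P :&: vset Q \subset [set a; b] -> is_circle ends (P :|: Q).
Proof.
move=> pP pQ ab dPQ H; have Hv := sub2P H.
have /andP[aP bP] := pth_ends pP ab; have /andP[aQ bQ] := pth_ends pQ ab.
have [daP dbP HiP cnP] := pP; have [daQ dbQ HiQ cnQ] := pQ.
split; [|split].
- apply/set0Pn; move: aP; rewrite inE => /existsP[f /andP[fP _]].
  by exists f; rewrite inE fP.
- move=> v; rewrite deg_setU // vsetU inE.
  case: (eqVneq v a) => [->|va]; first by rewrite daP daQ ab.
  case: (eqVneq v b) => [->|vb]; first by rewrite dbP dbQ ab.
  move=> /orP[] vX.
    have vQ : v \notin vset Q by apply/negP => vQ; case: (Hv v vX vQ) => /eqP; rewrite ?(negbTE va) ?(negbTE vb).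
    by move: vQ; rewrite -deg0 => /eqP ->; rewrite HiP.
  have vP : v \notin vset P by apply/negP => vP; case: (Hv v vP vX) => /eqP; rewrite ?(negbTE va) ?(negbTE vb).
  by move: vP; rewrite -deg0 => /eqP ->; rewrite HiQ.
- have Ha : forall v, v \in vset (P :|: Q) -> connect (adjE (P :|: Q)) a v.
    move=> v; rewrite vsetU inE => /orP[] vX.
      by apply: connect_mono (subsetUl _ _) (cnP v vX).
    by apply: connect_mono (subsetUr _ _) (cnQ v vX).
  move=> u w uX wX; apply: connect_trans (Ha w wX).
  by rewrite connect_symE; apply: Ha.
Qed.

Lemma circ_conn Z : is_circle ends Z -> conn Z.
Proof. by move=> [_ [_ H]]. Qed.

Lemma degD A B w : A \subset B -> deg (B :\: A) w = deg B w - deg A w.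
Proof. by move=> sAB; rewrite (deg_sub w sAB) addKn. Qed.

Lemma circ_split N A u v : is_circle ends N -> A \subset N -> pth A u v -> u != v ->
  pth (N :\: A) u v.
Proof.
move=> cN sAN pA uv; have [_ [dN _]] := cN.
have [duA dvA HiA cA] := pA.
have /andP[uA vA] := pth_ends pA uv.
have vsN := subsetP (vset_sub sAN).
have key : forall w, w \in vset (N :\: A) -> w != u -> w != v ->
   deg (N :\: A) w = 2 /\ (forall g, g \in N -> inc w g -> g \in N :\: A).
  move=> w wF wu wv.
  have wN : w \in vset N by apply: (subsetP (vset_sub (subsetDl N A))).
  have wA : w \notin vset A.
    apply/negP => wA; move: wF; rewrite vsetP degD // dN // HiA //.
  split; first by move: wA; rewrite -deg0 degD // dN // => /eqP ->.
  move=> g gN Ig; rewrite inE gN andbT; apply/negP => gA.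
  by move: wA; rewrite (inc_vset gA Ig).
split; rewrite ?degD // ?dN ?vsN // ?duA ?dvA ?uv //.
  by move=> w wF wu wv; case: (key w wF wu wv).
apply: (comp_conn (G' := N) (b := v)) => //.
- exact: circ_conn.
- exact: subsetDl.
- exact: vsN.
- by rewrite degD // dN ?vsN // duA uv.
- by rewrite degD // dN ?vsN // dvA uv.
move=> y yF yu yv; have [-> H] := key y yF yu yv; by split.
Qed.

Lemma path_split P P1 a b c : pth P a b -> P1 \subset P -> pth P1 a c ->
  pth (P :\: P1) c b /\ vset P1 :&: vset (P :\: P1) \subset [set c].
Proof.
move=> pP sP1 pP1.
case: (eqVneq a c) => [ac|ac].
  subst c; rewrite (pth_trivial pP1) setD0 vset0 set0I sub0set; by split.
have ab : a != b.
  apply/negP => /eqP ab; subst b; move: sP1; rewrite (pth_trivial pP) subset0 => /eqP P10.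
  by move: (pth_ends pP1 ac); rewrite P10 vset0 inE.
have /andP[aP1 cP1] := pth_ends pP1 ac; have /andP[aP bP] := pth_ends pP ab.
have [daP dbP HiP cnP] := pP; have [daP1 dcP1 HiP1 cnP1] := pP1.
have vs1 := subsetP (vset_sub sP1).
have vsF := subsetP (vset_sub (subsetDl P P1)).
have dFa : deg (P :\: P1) a = 0 by rewrite degD // daP daP1 ab ac.
have aF : a \notin vset (P :\: P1) by rewrite -deg0 dFa.
have cP := vs1 c cP1.
have dPc : deg P c = (c != b) + 1.
  case: (eqVneq c b) => [->|cb]; first by rewrite dbP ab.
  by rewrite HiP // eq_sym.
have bP1 : b != c -> b \notin vset P1.
  move=> bc; apply/negP => bP1.
  have ba : b != a by rewrite eq_sym.
  have := deg_le b sP1; rewrite dbP ab HiP1 //.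
have key : forall w, w \in vset (P :\: P1) -> w != c -> w != b ->
   deg (P :\: P1) w = 2 /\ (forall g, g \in P -> inc w g -> g \in P :\: P1).
  move=> w wF wc wb.
  have wa : w != a by apply: contraNneq aF => <-.
  have wP := vsF w wF.
  have wP1 : w \notin vset P1.
    apply/negP => wP1; move: wF; rewrite vsetP degD // HiP // HiP1 //.
  split; first by move: wP1; rewrite -deg0 degD // HiP // => /eqP ->.
  move=> g gP Ig; rewrite inE gP andbT; apply/negP => gA.
  by move: wP1; rewrite (inc_vset gA Ig).
split; last first.
  apply/subsetP => w /setIP[wP1 wF]; rewrite inE.
  case: (eqVneq w c) => // wc.
  have wa : w != a by apply: contraNneq aF => <-.
  case: (eqVneq w b) => [wb|wb].
    by subst w; move: (bP1 wc); rewrite wP1.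
  by move: (wF); rewrite vsetP degD // (HiP w (vsF w wF) wa wb) (HiP1 w wP1 wa wc).
have dFc : deg (P :\: P1) c = (c != b) by rewrite degD // dPc dcP1 ac addnK.
have dFb : deg (P :\: P1) b = (c != b).
  case: (eqVneq c b) => [cb|cb]; first by move: dFc; rewrite cb eqxx.
  have cb' : b != c by rewrite eq_sym.
  move: (bP1 (cb' : b != c)); rewrite -deg0 => /eqP h.
  by rewrite degD // dbP h ab.
split => //; first by move=> w wF wc wb; case: (key w wF wc wb).
apply: (comp_conn (G' := P) (b := b)) => //.
- exact: pth_conn pP.
- exact: subsetDl.
- by rewrite dFc; case: (c != b).
- by rewrite dFb; case: (c != b).
move=> y yF yc yb; have [-> H] := key y yF yc yb; by split.
Qed.

Lemma circ_minus_edge Z f : is_circle ends Z -> f \in Z ->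
  pth (Z :\ f) (ends f).1 (ends f).2.
Proof.
move=> cZ fZ; have [_ [dZ _]] := cZ.
have sfZ : [set f] \subset Z by rewrite sub1set.
have nl := noloop f; rewrite /is_loop in nl.
have /andP[f1Z f2Z] := ends_vset fZ.
have key : forall w, w \in vset (Z :\ f) -> w != (ends f).1 -> w != (ends f).2 ->
   deg (Z :\ f) w = 2 /\ (forall g, g \in Z -> inc w g -> g \in Z :\ f).
  move=> w wF w1 w2.
  have wZ : w \in vset Z by apply: (subsetP (vset_sub (subsetDl Z [set f]))).
  have ew0 : ew f w = 0 by rewrite /ew eq_sym (negbTE w1) eq_sym (negbTE w2).
  split; first by rewrite degD // deg1 ew0 dZ.
  move=> g gZ Ig; rewrite !inE gZ andbT; apply/negP => /eqP gf.
  by move: Ig; rewrite gf /incident eq_sym (negbTE w1) eq_sym (negbTE w2).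
have e1 : ew f (ends f).1 = 1 by rewrite /ew eqxx eq_sym (negbTE nl).
have e2 : ew f (ends f).2 = 1 by rewrite /ew eqxx (negbTE nl).
split; rewrite ?degD // ?deg1 ?dZ // ?e1 ?e2 ?nl //.
  by move=> w wF w1 w2; case: (key w wF w1 w2).
apply: (comp_conn (G' := Z) (b := (ends f).2)) => //.
- exact: circ_conn.
- exact: subsetDl.
- by rewrite degD // deg1 dZ // e1.
- by rewrite degD // deg1 dZ // e2.
move=> y yF y1 y2; have [-> H] := key y yF y1 y2; by split.
Qed.

Lemma pth_adj f u w : (ends f = (u, w)) \/ (ends f = (w, u)) -> pth [set f] u w.
Proof.
by case=> H; [|apply: pth_rev]; move: (pth_edge f); rewrite H.
Qed.

Lemma vset_adj f u w : (ends f = (u, w)) \/ (ends f = (w, u)) -> vset [set f] = [set u; w].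
Proof. by rewrite vset1; case=> ->; rewrite // setUC. Qed.

Lemma fh_seq F (T : {set V}) s : forall a, path (adjE F) a s -> uniq (a :: s) ->
  last a s \in T -> exists t X, [/\ t \in T, X \subset F, pth X a t,
     vset X :&: T \subset [set t] & {subset vset X <= a :: s}].
Proof.
elim: s => [|w s IH] a.
  move=> _ _ /= aT; exists a, set0; split; rewrite ?sub0set ?vset0 ?set0I ?sub0set //.
    exact: pth0.
  by move=> z; rewrite ?vset0 inE.
move=> /= /andP[aw ps] /andP[aws us] lT.
case: (boolP (a \in T)) => aT.
  exists a, set0; split; rewrite ?sub0set ?vset0 ?set0I ?sub0set //.
    exact: pth0.
  by move=> z; rewrite ?vset0 inE.
have [t [X [tT sXF pX XT sXs]]] := IH w ps us lT.
have [f fF Hf] := adjE_edge aw.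
have pf := pth_adj Hf; have vf := vset_adj Hf.
have aX : a \notin vset X by apply/negP => /sXs; rewrite (negbTE aws).
have HfX : vset [set f] :&: vset X \subset [set w].
  apply/subsetP => z /setIP[]; rewrite vf => /set2P[] -> H; last exact: set11.
  by move: aX; rewrite H.
exists t, ([set f] :|: X); split => //.
- by rewrite subUset sub1set fF.
- exact: pth_cat pf pX HfX.
- apply/subsetP => z /setIP[]; rewrite vsetU => /setUP[].
    rewrite vf => /set2P[] -> zT; first by rewrite zT in aT.
    case: (eqVneq w t) => [->|wt]; first exact: set11.
    have /andP[wX _] := pth_ends pX wt.
    by apply/set1P; apply: (sub1P XT).
  by move=> zX zT; apply/set1P; apply: (sub1P XT).
- move=> z; rewrite vsetU => /setUP[].
    by rewrite vf => /set2P[] ->; rewrite !in_cons eqxx ?orbT.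
  by move=> /sXs H; rewrite in_cons H orbT.
Qed.

Lemma first_hit F a (T : {set V}) y : connect (adjE F) a y -> y \in T ->
  exists t X, [/\ t \in T, X \subset F, pth X a t & vset X :&: T \subset [set t]].
Proof.
move=> /connectP[s ps ->].
case: (shortenP ps) => s' ps' us' _ yT.
have [t [X [tT sXF pX XT _]]] := fh_seq ps' us' yT.
by exists t, X.
Qed.

Lemma path_in F a b : connect (adjE F) a b -> exists2 X : {set E}, X \subset F & pth X a b.
Proof.
move=> cab; have [t [X [tT sXF pX _]]] := first_hit cab (set11 b).
by exists X; move: tT pX; rewrite inE => /eqP ->.
Qed.

Definition avoidE x := [set g | ~~ inc x g].

Lemma avoid_vset X x : X \subset avoidE x -> x \notin vset X.
Proof.
move=> sX; apply/negP; rewrite inE => /existsP[g /andP[gX Ig]].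
by move: (subsetP sX g gX); rewrite inE Ig.
Qed.

Lemma disjU A B Z : [disjoint A & Z] -> [disjoint B & Z] -> [disjoint A :|: B & Z].
Proof.
move=> dA dB; apply: disjP => g /setUP[] gX; apply/negP => gZ.
  exact: disjE dA gX gZ.
exact: disjE dB gX gZ.
Qed.

Lemma circ_two Z z : is_circle ends Z -> exists2 c, c \in vset Z & c != z.
Proof.
move=> [/set0Pn[f fZ] _]; have /andP[h1 h2] := ends_vset fZ.
have nl := noloop f; rewrite /is_loop in nl.
case: (eqVneq (ends f).1 z) => [e1|e1]; last by exists (ends f).1.
exists (ends f).2 => //; by rewrite -e1 eq_sym.
Qed.

Lemma circ_vert Z : is_circle ends Z -> exists v, v \in vset Z.
Proof.
move=> [/set0Pn[f fZ] _]; have /andP[h1 h2] := ends_vset fZ; by exists (ends f).1.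
Qed.

Lemma reroute Z e0 a1 c W : is_circle ends Z -> e0 \in Z -> a1 != c ->
  a1 \in vset Z -> c \in vset Z -> pth W a1 c ->
  vset W :&: vset Z \subset [set a1; c] -> [disjoint W & Z] ->
  exists Z', [/\ is_circle ends Z', e0 \in Z', {subset vset W <= vset Z'} &
                 {subset vset Z' <= vset Z :|: vset W}].
Proof.
move=> cZ eZ ac aZ cZv pW HW dW.
have gen : forall A, A \subset Z -> pth A a1 c -> e0 \in A ->
  exists Z', [/\ is_circle ends Z', e0 \in Z', {subset vset W <= vset Z'} &
                 {subset vset Z' <= vset Z :|: vset W}].
  move=> A sAZ pA eA; exists (A :|: W); split.
  - apply: circ_union pA pW ac _ _.
      by rewrite disjoint_sym; apply: disjointWr sAZ dW.
    apply/subsetP => z /setIP[zA zW]; apply/set2P; apply: (sub2P HW) => //.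
    exact: (subsetP (vset_sub sAZ)).
  - by rewrite inE eA.
  - by move=> z zW; rewrite vsetU inE zW orbT.
  - move=> z; rewrite vsetU => /setUP[zA|zW]; rewrite inE; last by rewrite zW orbT.
    by rewrite (subsetP (vset_sub sAZ) z zA).
have [A1 sA1 pA1] := path_in (circ_conn cZ aZ cZv).
case: (boolP (e0 \in A1)) => eA1; first exact: gen eA1.
apply: (gen (Z :\: A1)); first exact: subsetDl.
  exact: circ_split.
by rewrite inE eA1.
Qed.

Definition two_in Z N := exists u v,
  [/\ u != v, u \in vset Z, v \in vset Z, u \in vset N & v \in vset N].

Hypothesis Gconn1 : forall x u w, u != x -> w != x -> connect (adjE (avoidE x)) u w.
Hypothesis Gconn : forall u w, connect (adjE [set: E]) u w.

Lemma case_one Z N m e0 : is_circle ends Z -> e0 \in Z -> is_circle ends N ->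
  m \in vset Z -> m \in vset N ->
  (forall z, z \in vset Z -> z \in vset N -> z = m) ->
  exists Z', [/\ is_circle ends Z', e0 \in Z' & two_in Z' N].
Proof.
move=> cZ eZ cN mZ mN ZN.
have [c0 c0Z c0m] := circ_two m cZ.
have [n nN nm] := circ_two m cN.
have [c2 [X [c2Z sX pX XZ]]] := first_hit (Gconn1 nm c0m) c0Z.
have mX := avoid_vset sX.
have nZ : n \notin vset Z by apply/negP => nZ; move: nm; rewrite (ZN n nZ nN) eqxx.
have nc2 : n != c2 by apply: contraNneq nZ => ->.
have /andP[nX c2X] := pth_ends pX nc2.
have c2m : c2 != m by apply: contraNneq mX => <-.
have cX : connect (adjE X) c2 n by rewrite connect_symE; have [_ _ _ ->] := pX.
have nT : n \in vset N :\ m by rewrite in_setD1 nm nN.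
have [z [Q [zT sQ pQ QT]]] := first_hit cX nT.
move: zT; rewrite in_setD1 => /andP[zm zN].
have mQ : m \notin vset Q by apply: contra mX; apply: (subsetP (vset_sub sQ)).
have QN : vset Q :&: vset N \subset [set z].
  apply/subsetP => y /setIP[yQ yN]; apply/set1P; apply: (sub1P QT) => //.
  by rewrite in_setD1 yN andbT; apply: contraNneq mQ => <-.
have QZ : vset Q :&: vset Z \subset [set c2].
  apply/subsetP => y /setIP[yQ yZ]; apply/set1P; apply: (sub1P XZ) => //.
  exact: (subsetP (vset_sub sQ)).
have c2z : c2 != z.
  apply/negP => /eqP c2z; move: zm; rewrite -c2z (ZN c2 c2Z) ?eqxx //; by rewrite c2z.
have [A sA pA] := path_in (circ_conn cN zN mN).
have AN := subsetP (vset_sub sA).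
have QA : vset Q :&: vset A \subset [set z].
  apply/subsetP => y /setIP[yQ yA]; apply/set1P; apply: (sub1P QN) => //.
  exact: AN.
have pW := pth_rev (pth_cat pQ pA QA).
have AZ : vset A :&: vset Z \subset [set m].
  apply/subsetP => y /setIP[yA yZ]; apply/set1P; apply: ZN => //; exact: AN.
have mc2 : m != c2 by rewrite eq_sym.
have HW : vset (Q :|: A) :&: vset Z \subset [set m; c2].
  apply/subsetP => y /setIP[]; rewrite vsetU => /setUP[] yX yZ; apply/set2P.
    by right; apply: (sub1P QZ).
  by left; apply: (sub1P AZ).
have dW : [disjoint Q :|: A & Z].
  by apply: disjU; [apply: disj_vset QZ | apply: disj_vset AZ].
have [Z' [cZ' eZ' sW _]] := reroute cZ eZ mc2 mZ c2Z pW HW dW.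
exists Z'; split => //; exists m, z; split; rewrite ?(eq_sym m) //.
+ by apply: sW; rewrite vsetU inE; have /andP[_ ->] := pth_ends pA zm; rewrite orbT.
+ by apply: sW; rewrite vsetU inE; have /andP[-> _] := pth_ends pA zm; rewrite orbT.
Qed.

Lemma case_pos Z N m e0 : is_circle ends Z -> e0 \in Z -> is_circle ends N ->
  m \in vset Z -> m \in vset N ->
  exists Z', [/\ is_circle ends Z', e0 \in Z' & two_in Z' N].
Proof.
move=> cZ eZ cN mZ mN.
case: (boolP [exists y, [&& y \in vset Z, y \in vset N & y != m]]).
  move=> /existsP[y /and3P[yZ yN ym]].
  by exists Z; split => //; exists y, m; split.
rewrite negb_exists => /forallP H.
apply: (case_one cZ eZ cN mZ mN) => y yZ yN.
by apply/eqP; move: (H y); rewrite yZ yN /= negbK.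
Qed.

Definition zhyp N e0 Z P1 n1 a1 :=
  [/\ is_circle ends Z /\ e0 \in Z, (forall z, z \in vset Z -> z \notin vset N),
      n1 \in vset N /\ a1 \in vset Z, pth P1 n1 a1 &
      vset P1 :&: vset N \subset [set n1] /\ vset P1 :&: vset Z \subset [set a1]].

Lemma zero_step N e0 Z P1 n1 a1 : is_circle ends N ->
  (forall Z' P1' n1' a1', #|P1'| < #|P1| -> zhyp N e0 Z' P1' n1' a1' ->
     exists Z'', [/\ is_circle ends Z'', e0 \in Z'' & two_in Z'' N]) ->
  zhyp N e0 Z P1 n1 a1 ->
  exists Z', [/\ is_circle ends Z', e0 \in Z' & two_in Z' N].
Proof.
move=> cN IH [[cZ eZ] ZN [n1N a1Z] pP1 [P1N P1Z]].
have n1Z : n1 \notin vset Z by apply/negP => /ZN; rewrite n1N.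
have n1a1 : n1 != a1 by apply: contraNneq n1Z => ->.
have /andP[n1P a1P] := pth_ends pP1 n1a1.
have [c0 c0Z c0a] := circ_two a1 cZ.
have [c [X [cZv sX pX XZ]]] := first_hit (Gconn1 n1a1 c0a) c0Z.
have a1X := avoid_vset sX.
have n1c : n1 != c by apply: contraNneq n1Z => ->.
have /andP[n1X cX] := pth_ends pX n1c.
have ca1 : c != a1 by apply: contraNneq a1X => <-.
have cXn : connect (adjE X) c n1 by rewrite connect_symE; have [_ _ _ ->] := pX.
set T := (vset N :|: vset P1) :\ a1.
have n1T : n1 \in T by rewrite in_setD1 n1a1 in_setU n1N.
have [z [Q [zT sQ pQ QT]]] := first_hit cXn n1T.
move: zT; rewrite in_setD1 in_setU => /andP[za1 zNP].
have a1Q : a1 \notin vset Q by apply: contra a1X; apply: (subsetP (vset_sub sQ)).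
have QZ : vset Q :&: vset Z \subset [set c].
  apply/subsetP => y /setIP[yQ yZ]; apply/set1P; apply: (sub1P XZ) => //.
  exact: (subsetP (vset_sub sQ)).
have QT' : forall y, y \in vset Q -> y \in vset N \/ y \in vset P1 -> y = z.
  move=> y yQ yNP; apply: (sub1P QT) => //.
  rewrite in_setD1 in_setU; apply/andP; split; first by apply: contraNneq a1Q => <-.
  by case: yNP => ->; rewrite ?orbT.
have zZ : z \notin vset Z.
  apply/negP => zZ; case/orP: zNP => zX; first by move: (ZN z zZ); rewrite zX.
  by move: za1; rewrite (sub1P P1Z zX zZ) eqxx.
have cz : c != z by apply: contraNneq zZ => <-.
have /andP[cQ zQ] := pth_ends pQ cz.
have P1Zs : forall y, y \in vset P1 -> y \in vset Z -> y = a1 := sub1P P1Z.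
case: (boolP (z \in vset P1)) => zP1.
  have [P1a sP1a pP1a] := path_in (pth_conn pP1 n1P zP1).
  have [pP1b Hab] := path_split pP1 sP1a pP1a.
  set P1b := P1 :\: P1a in pP1b Hab.
  have sP1b : P1b \subset P1 by apply: subsetDl.
  have vb := subsetP (vset_sub sP1b); have va := subsetP (vset_sub sP1a).
  have bQ : vset P1b :&: vset Q \subset [set z].
    apply/subsetP => y /setIP[yb yQ]; apply/set1P; apply: QT' => //; right; exact: vb.
  have pW := pth_cat (pth_rev pP1b) (pth_rev pQ) bQ.
  have bZ : vset P1b :&: vset Z \subset [set a1].
    apply/subsetP => y /setIP[yb yZ]; apply/set1P; apply: P1Zs => //; exact: vb.
  have HW : vset (P1b :|: Q) :&: vset Z \subset [set a1; c].
    apply/subsetP => y /setIP[]; rewrite vsetU => /setUP[] yX yZ; apply/set2P.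
      by left; apply: (sub1P bZ).
    by right; apply: (sub1P QZ).
  have dW : [disjoint P1b :|: Q & Z].
    by apply: disjU; [apply: disj_vset bZ | apply: disj_vset QZ].
  have [Z' [cZ' eZ' sW sZ']] := reroute cZ eZ (neq_sym ca1) a1Z cZv pW HW dW.
  have zZ' : z \in vset Z' by apply: sW; rewrite vsetU inE zQ orbT.
  case: (eqVneq z n1) => [zn1|zn1].
    by apply: (case_pos cZ' eZ' cN zZ'); rewrite zn1.
  have /andP[_ a1b] := pth_ends pP1b za1.
  have n1a : n1 \in vset P1a by have /andP[] := pth_ends pP1a (neq_sym zn1).
  have a1a : a1 \notin vset P1a.
    by apply/negP => a1a; move: za1; rewrite (sub1P Hab a1a a1b) eqxx.
  have n1b : n1 \notin vset P1b.
    by apply/negP => n1b; move: zn1; rewrite (sub1P Hab n1a n1b) eqxx.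
  apply: (IH Z' P1a n1 z).
    rewrite -(cardsID P1a P1) (setIidPr sP1a) -/P1b -addn1 leq_add2l card_gt0.
    by rewrite -vset_eq0; apply/set0Pn; exists z; have /andP[] := pth_ends pP1b za1.
  split => //; last split.
  - move=> y /sZ'; rewrite !vsetU => /setUP[yZ|/setUP[yb|yQ]].
    + exact: ZN.
    + apply/negP => yN; move: n1b; rewrite -(sub1P P1N (vb y yb) yN) yb.
      by [].
    + apply/negP => yN; have yz := QT' y yQ (or_introl yN).
      by move: zn1; rewrite -(sub1P P1N zP1) ?eqxx // -yz.
  - apply/subsetP => y /setIP[ya yN]; apply/set1P; apply: (sub1P P1N) => //; exact: va.
  - apply/subsetP => y /setIP[ya /sZ']; rewrite !vsetU => /setUP[yZ|/setUP[yb|yQ]]; apply/set1P.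
    + by move: a1a; rewrite -(P1Zs y (va y ya) yZ) ya.
    + exact: (sub1P Hab).
    + by apply: QT' => //; right; apply: va.
have zN : z \in vset N by move: zNP; rewrite (negbTE zP1) orbF.
have n1z : n1 != z by apply: contraNneq zP1 => <-.
have [A sA pA] := path_in (circ_conn cN n1N zN).
have vA := subsetP (vset_sub sA).
have PA : vset P1 :&: vset A \subset [set n1].
  apply/subsetP => y /setIP[yP yA]; apply/set1P; apply: (sub1P P1N) => //; exact: vA.
have pPA := pth_cat (pth_rev pP1) pA PA.
have PAQ : vset (P1 :|: A) :&: vset Q \subset [set z].
  apply/subsetP => y /setIP[]; rewrite vsetU => /setUP[] yX yQ; apply/set1P; apply: QT' => //.
    by right.
  by left; apply: vA.
have pW := pth_cat pPA (pth_rev pQ) PAQ.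
have AZ : vset A :&: vset Z \subset [set a1].
  apply/subsetP => y /setIP[yA yZ]; move: (ZN y yZ); by rewrite vA.
have HW : vset (P1 :|: A :|: Q) :&: vset Z \subset [set a1; c].
  apply/subsetP => y /setIP[]; rewrite !vsetU => /setUP[/setUP[]|] yX yZ; apply/set2P.
  - by left; apply: P1Zs.
  - by left; apply: (sub1P AZ).
  - by right; apply: (sub1P QZ).
have dW : [disjoint P1 :|: A :|: Q & Z].
  by apply: disjU; [apply: disjU; [apply: disj_vset P1Z|apply: disj_vset AZ]|apply: disj_vset QZ].
have [Z' [cZ' eZ' sW _]] := reroute cZ eZ (neq_sym ca1) a1Z cZv pW HW dW.
exists Z'; split => //; exists n1, z; split => //.
  by apply: sW; rewrite !vsetU !in_setU n1P.
by apply: sW; rewrite !vsetU !in_setU zQ !orbT.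
Qed.

Lemma goal_two N e0 Z : is_circle ends N -> is_circle ends Z -> e0 \in Z ->
  exists Z', [/\ is_circle ends Z', e0 \in Z' & two_in Z' N].
Proof.
move=> cN cZ eZ.
have main : forall k Z P1 n1 a1, #|P1| = k -> zhyp N e0 Z P1 n1 a1 ->
    exists Z', [/\ is_circle ends Z', e0 \in Z' & two_in Z' N].
  elim/ltn_ind => k IH Z1 P1 n1 a1 Hk H.
  apply: (zero_step cN _ H) => Z' P1' n1' a1' lt H'.
  by apply: (IH #|P1'| _ Z' P1' n1' a1' erefl H'); rewrite -Hk.
case: (boolP [exists m, (m \in vset Z) && (m \in vset N)]).
  by move=> /existsP[m /andP[mZ mN]]; apply: (case_pos cZ eZ cN mZ mN).
rewrite negb_exists => /forallP ZN'.
have ZN : forall z, z \in vset Z -> z \notin vset N.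
  by move=> z zZ; move: (ZN' z); rewrite zZ.
have [n0 n0N] := circ_vert cN.
have [z0 z0Z] := circ_vert cZ.
have [a1 [X [a1Z _ pX XZ]]] := first_hit (Gconn n0 z0) z0Z.
have n0Z : n0 \notin vset Z by apply/negP => /ZN; rewrite n0N.
have n0a1 : n0 != a1 by apply: contraNneq n0Z => ->.
have cXa : connect (adjE X) a1 n0 by rewrite connect_symE; have [_ _ _ ->] := pX; have /andP[] := pth_ends pX n0a1.
have [n1 [Y [n1N sY pY YN]]] := first_hit cXa n0N.
apply: (main _ Z Y n1 a1 erefl).
split; [by split | exact: ZN | by split | exact: pth_rev | split]; first exact: YN.
- apply/subsetP => y /setIP[yY yZ]; apply/set1P; apply: (sub1P XZ) => //.
  exact: (subsetP (vset_sub sY)).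
Qed.

Variable sig : E -> bool.
Definition par F := odd #|[set f in F | sig f]|.

Lemma par_union A B : [disjoint A & B] -> par (A :|: B) = par A (+) par B.
Proof.
move=> dAB; rewrite /par -oddD.
have -> : [set f in A :|: B | sig f] = [set f in A | sig f] :|: [set f in B | sig f].
  by apply/setP => f; rewrite !inE andb_orl.
rewrite cardsU.
have -> : [set f in A | sig f] :&: [set f in B | sig f] = set0.
  apply/setP => f; rewrite !inE; apply/negbTE/negP => /andP[/andP[fA _] /andP[fB _]].
  exact: disjE dAB fA fB.
by rewrite cards0 subn0.
Qed.

Lemma ew_le1 f v : ew f v <= 1.
Proof.
move: (noloop f); rewrite /is_loop /ew.
case: (ends f) => x y /= xy.
case: eqP => [xv|_]; case: eqP => [yv|_] //.
by move: xy; rewrite xv yv eqxx.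
Qed.

Lemma vset_minus_edge Z f w : is_circle ends Z -> f \in Z -> w \in vset Z -> w \in vset (Z :\ f).
Proof.
move=> [_ [dZ _]] fZ wZ; rewrite vsetP degD ?sub1set // deg1 dZ //.
by have := ew_le1 f w; case: (ew f w) => [|[]].
Qed.

Lemma fin C N Z e : is_circle ends C -> e \in C ->
  (forall C', is_circle ends C' -> e \in C' -> ~~ par C' -> C' = C) ->
  is_circle ends N -> par N -> [disjoint N & C] ->
  is_circle ends Z -> e \in Z -> two_in Z N -> False.
Proof.
move=> cC eC uniqC cN pN dNC cZ eZ [u0 [v0 [uv0 u0Z v0Z u0N v0N]]].
set p := (ends e).1; set q := (ends e).2.
have pq : p != q by have := noloop e.
have pR := circ_minus_edge cZ eZ; rewrite -/p -/q in pR.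
set R := Z :\ e in pR.
have u0R : u0 \in vset R by apply: vset_minus_edge.
have v0R : v0 \in vset R by apply: vset_minus_edge.
have pRv : p \in vset R by have /andP[] := pth_ends pR pq.
have qRv : q \in vset R by have /andP[] := pth_ends pR pq.
have cR := pth_conn pR.
have [u [X [uN sX pX XN]]] := first_hit (cR p u0 pRv u0R) u0N.
have [pR2 XR2] := path_split pR sX pX.
set R2 := R :\: X in pR2 XR2.
have sR2 : R2 \subset R by apply: subsetDl.
have [w [wR wN wu]] : exists w, [/\ w \in vset R, w \in vset N & w != u].
  case: (eqVneq u0 u) => [e0|ne]; last by exists u0.
  by exists v0; split => //; rewrite -e0 eq_sym.
have wX : w \notin vset X by apply/negP => wX; move: wu; rewrite (sub1P XN wX wN) eqxx.
have wR2 : w \in vset R2.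
  move: wR; rewrite !vsetP (deg_sub w sX).
  by move: wX; rewrite -deg0 => /eqP ->.
have uq : u != q.
  apply/negP => /eqP uq; move: wR2 pR2; rewrite uq => wR2 pR2.
  by move: wR2; rewrite (pth_trivial pR2) vset0 inE.
have qR2 : q \in vset R2 by have /andP[] := pth_ends pR2 uq.
have [v [Y [vN sY pY YN]]] := first_hit (pth_conn pR2 qR2 wR2) wN.
have uv : u != v.
  apply/negP => /eqP uv; subst v.
  have [pR3 _] := path_split (pth_rev pR2) sY pY.
  have R3 := pth_trivial pR3.
  have R2Y : R2 = Y.
    apply/eqP; rewrite eqEsubset sY andbT; apply/subsetP => g gR2.
    apply/negPn/negP => gY; have : g \in R2 :\: Y by rewrite inE gY gR2.
    by rewrite R3 inE.
  by move: wu; rewrite -R2Y in YN; rewrite (sub1P YN wR2 wN) eqxx.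
have XY : forall y, y \in vset X -> y \in vset Y -> False.
  move=> y yX yY.
  have yR2 : y \in vset R2 by apply: (subsetP (vset_sub sY)).
  have yu := sub1P XR2 yX yR2; subst y.
  by move: uv; rewrite (sub1P YN yY uN) eqxx.
have eR : e \notin R by rewrite !inE eqxx.
have gen : forall A, A \subset N -> pth A u v ->
    par ([set e] :|: (X :|: A :|: Y)) = par [set e] (+) par X (+) par A (+) par Y
    /\ par ([set e] :|: (X :|: A :|: Y)).
  move=> A sA pA; have vA := subsetP (vset_sub sA).
  have XA : vset X :&: vset A \subset [set u].
    apply/subsetP => y /setIP[yX yA]; apply/set1P; apply: (sub1P XN) => //; exact: vA.
  have pXA := pth_cat pX pA XA.
  have XAY : vset (X :|: A) :&: vset Y \subset [set v].
    apply/subsetP => y /setIP[]; rewrite vsetU => /setUP[] yX yY; apply/set1P.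
      by case: (XY y yX yY).
    by apply: (sub1P YN) => //; apply: vA.
  have pRi := pth_cat pXA (pth_rev pY) XAY.
  have dE : [disjoint [set e] & X :|: A :|: Y].
    apply: disjP => f; rewrite inE => /eqP ->; rewrite !in_setU; apply/negP => /orP[/orP[]|] H.
    - by move: eR; rewrite (subsetP sX e H).
    - by apply: (disjE dNC (subsetP sA e H) eC).
    - by move: eR; rewrite (subsetP sR2 e (subsetP sY e H)).
  have HE : vset [set e] :&: vset (X :|: A :|: Y) \subset [set p; q].
    by apply/subsetP => y /setIP[]; rewrite vset1.
  have cZi := circ_union (pth_edge e) pRi pq dE HE.
  have eq1 : par ([set e] :|: (X :|: A :|: Y)) = par [set e] (+) par X (+) par A (+) par Y.
    rewrite par_union // par_union ?(disj_vset XAY) // par_union ?(disj_vset XA) //.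
    by rewrite !addbA.
  split => //; apply/negPn/negP => npos.
  have eZi : e \in [set e] :|: (X :|: A :|: Y) by rewrite !inE eqxx.
  have Ci := uniqC _ cZi eZi npos.
  have /andP[uA _] := pth_ends pA uv.
  move: uA; rewrite inE => /existsP[g /andP[gA _]].
  apply: (disjE dNC (subsetP sA g gA)); rewrite -Ci !inE gA; by rewrite !orbT.
have [A1 sA1 pA1] := path_in (circ_conn cN uN vN).
have pA2 := circ_split cN sA1 pA1 uv.
have [e1 t1] := gen A1 sA1 pA1.
have [e2 t2] := gen _ (subsetDl N A1) pA2.
have : par N = par A1 (+) par (N :\: A1).
  rewrite -par_union; last by apply: disjP => g gA; rewrite inE gA.
  congr par; apply/setP => g; rewrite !inE.
  by case: (boolP (g \in A1)) => // gA; rewrite (subsetP sA1 g gA).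
move: t1 t2; rewrite e1 e2 pN.
by case: (par [set e]); case: (par X); case: (par Y); case: (par A1); case: (par (N :\: A1)).
Qed.

End Gr.

Unset Implicit Arguments.

Theorem mainTheorem5 (V E : finType) (ends : E -> V * V) (sig : E -> bool)
  (e : E) (C : {set E}) :
  is_block ends ->
  ~ single_edge E ->
  ~ graph_is_circle ends ->
  battery_pos ends sig e C ->
  forall D : {set E}, is_bridge ends C D -> balanced ends sig D.
Proof.
move=> [c0 [c1 cl]] nse _ [cC eC posC uniqC] D HD C' sub cC'.
have noloop : forall f, ~~ is_loop ends f.
  by move=> f; apply/negP => /cl.
case: HD => [[f [fC f1 f2 nlf HD]]|[x [xC HD]]].
  exfalso; subst D; have [/set0Pn[g gC] [dC _]] := cC'.
  have gf : g = f by apply/set1P; apply: (subsetP sub).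
  subst g; have /andP[h1 _] := ends_vset ends gC.
  move: (dC _ h1); rewrite (degE ends) (eq_bigl (fun g => g == f)); last first.
    move=> g; apply/idP/idP => [/(subsetP sub)|/eqP ->//]; by rewrite inE.
  rewrite big_pred1_eq /ew eqxx /=.
  by move: nlf; rewrite /is_loop eq_sym => /negbTE ->.
have Gconn : forall u w, connect (adjE ends [set: E]) u w.
  move=> u w; have h : connect (adj_avoid ends set0) u w by apply: c0; rewrite inE.
  by apply: connect_sub h => y z /and3P[_ _ H]; apply: connect1.
have Gconn1 : forall x u w, u != x -> w != x -> connect (adjE ends (avoidE ends x)) u w.
  move=> y u1 w1 uy wy; apply: connect_sub (c1 y u1 w1 _ _); rewrite ?inE //.
  move=> a b /and3P[]; rewrite !inE => ay byy /(adjE_edge) [g _ Hg].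
  apply: connect1; apply/existsP; exists g.
  rewrite !inE /incident; case: Hg => -> /=; rewrite (negbTE ay) (negbTE byy) eqxx ?orbT //.
apply/negP => npos.
have out : forall y, connect (adj_avoid ends (vset ends C)) x y -> y \notin vset ends C.
  move=> y cy.
  apply: (@connect_closed V (adj_avoid ends (vset ends C)) (fun y => y \notin vset ends C) x y _ xC cy).
  by move=> a b _ /and3P[].
have dNC : [disjoint C' & C].
  apply: disjP => g gC'; apply/negP => gC.
  move: (subsetP sub g gC'); rewrite HD inE => /existsP[y /andP[Iy cy]].
  by move: (out y cy); rewrite (inc_vset gC Iy).
have [Z' [cZ' eZ' two]] := goal_two noloop Gconn1 Gconn cC' cC eC.
apply: (fin noloop (sig := sig) cC eC _ cC' _ dNC cZ' eZ' two).
  move=> C'' cC'' eC'' pC''; exact: uniqC.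
exact: npos.
Qed.
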